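(* Let $J$ be a finite set and let $V=\bigoplus_{i,j\in J}V_{ij}$ be a connected bi-$J$-graded finite dimensional vector space, and let $\Gamma$ be the directed graph with vertex set $J$ whose edges from $i$ to $j$ form a chosen basis of $V_{ij}$. Then the monoidal algebra $\mathcal{P}(\mathrm{Vec}(J\times J),V)_{\bullet\to\bullet}$, given by $\mathcal{P}_{m\to n}=\mathrm{Hom}_{\mathrm{Vec}(J\times J)}(V^{\otimes m}\to V^{\otimes n})$ with tangles acting by the graphical calculus, is isomorphic to the graph monoidal algebra $\mathcal{GMA}(\Gamma)_{\bullet\to\bullet}$.
   Context: $\mathrm{Vec}(J\times J)$ is the tensor category of finite dimensional bi-$J$-graded vector spaces $V=\bigoplus_{i,j}V_{ij}$ with grading-preserving linear maps and tensor product $(V\otimes W)_{ik}=\bigoplus_{j}V_{ij}\otimes W_{jk}$. $V$ is connected if for all $i,k\in J$ there is a sequence $i=j_0,\dots,j_n=k$ with $V_{j_{\ell-1}j_\ell}\ne0$. A monoidal tangle (single label) is a rectangle with finitely many rectangles removed and non-crossing strings, oriented upward with no local maxima or minima, beginning and ending on tops/bottoms of rectangles, up to such isotopy; monoidal tangles form a colored operad by insertion. A monoidal algebra is a family of vector spaces $\mathcal{P}_{m\to n}$ ($m,n\ge0$) with a multilinear action of monoidal tangles (a tangle with $k$ inputs having $m_i$ strings at the bottom and $n_i$ at the top of the $i$th input gives a map $\prod_i\mathcal{P}_{m_i\to n_i}\to\mathcal{P}_{m_0\to n_0}$) compatible with composition. An isomorphism of monoidal algebras is a family of linear isomorphisms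 intertwining all tangle actions. The graph monoidal algebra $\mathcal{GMA}(\Gamma)_{m\to n}$ has basis the pairs $(p,q)$ of paths in $\Gamma$ of lengths $m,n$ with the same source and same target; a tangle $T$ acts by $T((p_1,q_1),\dots,(p_k,q_k))=\sum_\sigma\prod_i\delta_{\sigma|_i=(p_i,q_i)}\,\sigma|_0$, the sum over states $\sigma$ (assignments of vertices to regions and edges to strings such that a string labelled $\varepsilon$ has $s(\varepsilon)$ on its left region and $t(\varepsilon)$ on its right), where $\sigma|_i$ is the pair of paths read left to right along the bottom and top of the $i$th rectangle. *)

(* Defs.v *)
From HB Require Import structures.
From mathcomp Require Import all_boot all_algebra.
Set Implicit Arguments. Unset Strict Implicit. Unset Printing Implicit Defensive.
Import GRing.Theory.
Local Open Scope ring_scope.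

(* Monoidal tangles (single label), in height-ordered ("generic") form.    *)
(* A tangle with s strings at the bottom and k at the top is a stack of   *)
(* input rectangles, read bottom to top; MT_box p m n r t puts an input   *)
(* rectangle with m strings below and n above, having p through-strings   *)
(* on its left and r on its right, and then continues with t above it.    *)
(* Inputs are numbered by height.                                         *)
Inductive mtangle : nat -> nat -> Type :=
| MT_id (s : nat) : mtangle s s
| MT_box (p m n r k : nat) (t : mtangle (p + n + r) k) : mtangle (p + m + r) k.

Fixpoint tinputs (P : nat -> nat -> Type) s k (t : mtangle s k) : Type :=
  match t with
  | MT_id _ => unit
  | @MT_box p m n r k t' => (P m n * tinputs P t')%type
  end.

Fixpoint tmap (P Q : nat -> nat -> Type) (f : forall m n, P m n -> Q m n)
  s k (t : mtangle s k) : tinputs P t -> tinputs Q t :=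
  match t return tinputs P t -> tinputs Q t with
  | MT_id _ => fun _ => tt
  | @MT_box p m n r k t' => fun xs => (f m n xs.1, @tmap P Q f _ _ t' xs.2)
  end.

Fixpoint tall (P : nat -> nat -> Type) (Pr : forall m n, P m n -> Prop)
  s k (t : mtangle s k) : tinputs P t -> Prop :=
  match t return tinputs P t -> Prop with
  | MT_id _ => fun _ => True
  | @MT_box p m n r k t' => fun xs => Pr m n xs.1 /\ @tall P Pr _ _ t' xs.2
  end.

Section Graph.
Variables (J E : finType) (src tgt : E -> J).

Fixpoint is_walk (v : J) (es : seq E) : bool :=
  if es is e :: es' then (src e == v) && is_walk (tgt e) es' else true.

Definition gpath (n : nat) : finType :=
  {x : J * n.-tuple E | is_walk x.1 x.2}.

Definition pstart n (x : gpath n) : J := (val x).1.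
Definition pedges n (x : gpath n) : seq E := tval (val x).2.
Definition ptarget n (x : gpath n) : J := last (pstart x) (map tgt (pedges x)).
Definition pdata n (x : gpath n) : J * seq E := (pstart x, pedges x).

Definition gconnected : Prop :=
  forall i k : J, exists vs : seq J,
    path (fun a b => [exists e, (src e == a) && (tgt e == b)]) i vs /\ last i vs = k.

Definition splits a c (r : gpath (a + c)) (a1 : gpath a) (c1 : gpath c) : bool :=
  [&& pedges r == pedges a1 ++ pedges c1, pstart r == pstart a1
    & pstart c1 == ptarget a1].

Definition gbasis (m n : nat) : finType :=
  {pq : gpath m * gpath n | (pstart pq.1 == pstart pq.2) && (ptarget pq.1 == ptarget pq.2)}.

Variable F : fieldType.

Definition GMA (m n : nat) := {ffun gbasis m n -> F^o}.

(* coefficient of the basis element (p, q) in x (0 if (p,q) is not a basis pair) *)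
Definition gcoef m n (x : GMA m n) (p : gpath m) (q : gpath n) : F :=
  if insub (p, q) is Some b then x b else 0.

(* States of a tangle: a labelling of regions by vertices and strings by   *)
(* edges; in height-ordered form it is given by, for each input rectangle, *)
(* the labels (L, A, B, R) of the strings to its left (L), below (A),      *)
(* above (B), to its right (R) together with the adjacent regions, and the *)
(* top labelling; validity glues consecutive horizontal slices.            *)
Fixpoint tstate s k (t : mtangle s k) : finType :=
  match t with
  | MT_id s => gpath s
  | @MT_box p m n r k t' =>
      ((gpath p * gpath m * gpath n * gpath r) * tstate t')%type
  end.

Definition st_bot s k (t : mtangle s k) : tstate t -> J * seq E :=
  match t return tstate t -> J * seq E with
  | MT_id _ => fun x => pdata x
  | @MT_box p m n r k t' => fun x =>
      let: (L, A, B, R) := x.1 in (pstart L, pedges L ++ pedges A ++ pedges R)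
  end.

Fixpoint st_top s k (t : mtangle s k) : tstate t -> J * seq E :=
  match t return tstate t -> J * seq E with
  | MT_id _ => fun x => pdata x
  | @MT_box p m n r k t' => fun x => @st_top _ _ t' x.2
  end.

Fixpoint st_valid s k (t : mtangle s k) : tstate t -> bool :=
  match t return tstate t -> bool with
  | MT_id _ => fun _ => true
  | @MT_box p m n r k t' => fun x =>
      let: (L, A, B, R) := x.1 in
      [&& ptarget L == pstart A, pstart A == pstart B,
          ptarget A == ptarget B, pstart R == ptarget A,
          @st_bot _ _ t' x.2 == (pstart L, pedges L ++ pedges B ++ pedges R)
        & @st_valid _ _ t' x.2]
  end.

(* prod_i delta_{sigma|_i = (p_i,q_i)} extended multilinearly:            *)
(* prod_i x_i(sigma|_i)                                                    *)
Fixpoint st_weight s k (t : mtangle s k) : tstate t -> tinputs GMA t -> F :=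
  match t return tstate t -> tinputs GMA t -> F with
  | MT_id _ => fun _ _ => 1
  | @MT_box p m n r k t' => fun x xs =>
      let: (L, A, B, R) := x.1 in gcoef xs.1 A B * @st_weight _ _ t' x.2 xs.2
  end.

Definition gma_act s k (t : mtangle s k) (xs : tinputs GMA t) : GMA s k :=
  [ffun b : gbasis s k =>
     \sum_(sg : tstate t | [&& st_valid sg, st_bot sg == pdata (val b).1
                                & st_top sg == pdata (val b).2])
        st_weight sg xs].

(* The monoidal algebra P(Vec(J x J), V)  where V_ij is the vector space   *)
(* with basis the edges i -> j.  V^{(x) m} is identified with functions on *)
(* paths of length m (the component (i,k) being the functions supported on *)
(* paths from i to k); morphisms are grading-preserving linear maps.       *)
Definition Vt (m : nat) := {ffun gpath m -> F^o}.

Definition supported_in m (i k : J) (v : Vt m) : Prop :=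
  forall r : gpath m, v r != 0 -> pstart r = i /\ ptarget r = k.

Definition graded m n (f : 'Hom(Vt m, Vt n)) : Prop :=
  forall (i k : J) (v : Vt m), supported_in i k v -> supported_in i k (f v).

Definition pdelta m (r : gpath m) : Vt m := [ffun r' => (r' == r)%:R].

(* tensor product of morphisms, V^{(x)a} (x) V^{(x)c} = V^{(x)(a+c)} *)
Definition htensor a b c d (f : 'Hom(Vt a, Vt b)) (g : 'Hom(Vt c, Vt d))
  : 'Hom(Vt (a + c), Vt (b + d)) :=
  linfun (fun v : Vt (a + c) => [ffun q : gpath (b + d) =>
    \sum_(r0 : gpath (a + c)) v r0 *
      \sum_(a1 : gpath a) \sum_(c1 : gpath c) \sum_(b1 : gpath b) \sum_(d1 : gpath d)
        (splits r0 a1 c1 && splits q b1 d1)%:R *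
          (f (pdelta a1) b1 * g (pdelta c1) d1)] : Vt (b + d)).

Definition hid m : 'Hom(Vt m, Vt m) := \1%VF.

Fixpoint vec_act s k (t : mtangle s k) :
    tinputs (fun m n => 'Hom(Vt m, Vt n)) t -> 'Hom(Vt s, Vt k) :=
  match t in mtangle s k return tinputs (fun m n => 'Hom(Vt m, Vt n)) t -> 'Hom(Vt s, Vt k) with
  | MT_id s => fun _ => hid s
  | @MT_box p m n r k t' => fun xs =>
      (@vec_act _ _ t' xs.2 \o htensor (htensor (hid p) xs.1) (hid r))%VF
  end.

End Graph.

(* Main.v *)
Require Import Defs.
From HB Require Import structures.
From mathcomp Require Import all_boot all_algebra.
Set Implicit Arguments. Unset Strict Implicit. Unset Printing Implicit Defensive.
Import GRing.Theory.
Local Open Scope ring_scope.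

Section Aux.
Variables (F : fieldType) (J E : finType) (src tgt : E -> J).
Local Notation gp := (gpath src tgt).
Local Notation Vt := (Vt src tgt F).
Local Notation walk := (is_walk src tgt).

Lemma pdata_inj n : injective (@pdata _ _ src tgt n).
Proof.
move=> [[j1 t1] h1] [[j2 t2] h2]; rewrite /pdata /pstart /pedges /= => -[e1 e2].
apply: val_inj => /=; congr pair => //; exact: val_inj.
Qed.

Lemma gp_eq n (x y : gp n) : pstart x = pstart y -> pedges x = pedges y -> x = y.
Proof. by move=> e1 e2; apply: pdata_inj; rewrite /pdata e1 e2. Qed.

Lemma walk_cat v s1 s2 : walk v (s1 ++ s2) = walk v s1 && walk (last v (map tgt s1)) s2.
Proof. by elim: s1 v => [|e s IH] v //=; rewrite IH andbA. Qed.

Lemma pwalk n (x : gp n) : walk (pstart x) (pedges x).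
Proof. exact: (valP x). Qed.

Lemma psize n (x : gp n) : size (pedges x) = n.
Proof. exact: size_tuple. Qed.

Lemma gpath_ex n v (es : seq E) : walk v es -> size es = n ->
  exists y : gp n, pdata y = (v, es).
Proof.
move=> hw hs; have hs' : size es == n by apply/eqP.
by exists (exist _ (v, Tuple hs') hw).
Qed.

Lemma sum_pdata n (y : gp n) (G : gp n -> F) :
  \sum_(x : gp n) (pdata x == pdata y)%:R * G x = G y.
Proof.
rewrite (bigD1 y) //= eqxx mul1r big1 ?addr0 // => x hx.
by rewrite (inj_eq (@pdata_inj n)) (negbTE hx) mul0r.
Qed.

Lemma ptargetE n (x : gp n) : ptarget x = last (pstart x) (map tgt (pedges x)).
Proof. by []. Qed.

Section Split.
Variables (a c : nat).

Lemma ltake_proof (t : (a + c).-tuple E) : size (take a t) == a.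
Proof. by rewrite size_takel // size_tuple leq_addr. Qed.
Lemma rdrop_proof (t : (a + c).-tuple E) : size (drop a t) == c.
Proof. by rewrite size_drop size_tuple addKn. Qed.

Lemma lsplit_proof (r : gp (a + c)) :
  walk (pstart r, Tuple (ltake_proof (val r).2)).1 (Tuple (ltake_proof (val r).2)).
Proof.
have h := pwalk r; rewrite -(cat_take_drop a (pedges r)) walk_cat in h.
by case/andP: h => h _; exact: h.
Qed.

Definition lsplit (r : gp (a + c)) : gp a :=
  exist _ (pstart r, Tuple (ltake_proof (val r).2)) (lsplit_proof r).

Lemma rsplit_proof (r : gp (a + c)) :
  walk (last (pstart r) (map tgt (take a (pedges r))), Tuple (rdrop_proof (val r).2)).1
       (Tuple (rdrop_proof (val r).2)).
Proof.
have h := pwalk r; rewrite -(cat_take_drop a (pedges r)) walk_cat in h.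
by case/andP: h => _ h; exact: h.
Qed.

Definition rsplit (r : gp (a + c)) : gp c :=
  exist _ (last (pstart r) (map tgt (take a (pedges r))), Tuple (rdrop_proof (val r).2))
    (rsplit_proof r).

Lemma lsplit_start r : pstart (lsplit r) = pstart r. Proof. by []. Qed.
Lemma lsplit_edges r : pedges (lsplit r) = take a (pedges r). Proof. by []. Qed.
Lemma rsplit_edges r : pedges (rsplit r) = drop a (pedges r). Proof. by []. Qed.
Lemma rsplit_start r : pstart (rsplit r) = ptarget (lsplit r). Proof. by []. Qed.
Lemma rsplit_target r : ptarget (rsplit r) = ptarget r.
Proof.
by rewrite !ptargetE rsplit_start ptargetE lsplit_edges rsplit_edges -last_cat
  -map_cat cat_take_drop.
Qed.

Lemma splits_eq (r : gp (a + c)) a1 c1 :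
  splits r a1 c1 = (a1 == lsplit r) && (c1 == rsplit r).
Proof.
apply/idP/idP.
  case/and3P => /eqP he /eqP hs /eqP hc.
  have e1 : a1 = lsplit r.
    apply: gp_eq; first by rewrite lsplit_start hs.
    by rewrite lsplit_edges he take_size_cat // psize.
  rewrite e1 eqxx /=; apply/eqP; apply: gp_eq.
    by rewrite hc rsplit_start e1.
  by rewrite rsplit_edges he drop_size_cat // psize.
case/andP => /eqP -> /eqP ->; apply/and3P; split => //.
by rewrite lsplit_edges rsplit_edges cat_take_drop.
Qed.

Lemma splits_self r : splits r (lsplit r) (rsplit r).
Proof. by rewrite splits_eq !eqxx. Qed.
End Split.

Lemma ptarget_cat v s1 s2 : last v (map tgt (s1 ++ s2)) = last (last v (map tgt s1)) (map tgt s2).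
Proof. by rewrite map_cat last_cat. Qed.


Lemma hidE m (v : Vt m) : hid src tgt F m v = v.
Proof. exact: id_lfunE. Qed.

Lemma pdeltaE m (r r' : gp m) : pdelta F r r' = (r' == r)%:R.
Proof. by rewrite ffunE. Qed.

Lemma vec_expand m (v : Vt m) : v = \sum_(r : gp m) v r *: pdelta F r.
Proof.
apply/ffunP => x; rewrite sum_ffunE (bigD1 x) //= big1 => [|y hy].
  by rewrite !ffunE eqxx addr0 -[RHS]/(v x * 1) mulr1.
by rewrite !ffunE eq_sym (negbTE hy) -[LHS]/(v y * 0) mulr0.
Qed.

Lemma lin_expand m n (h : 'Hom(Vt m, Vt n)) (v : Vt m) q :
  h v q = \sum_(r : gp m) v r * h (pdelta F r) q.
Proof.
rewrite {1}(vec_expand v) linear_sum sum_ffunE; apply: eq_bigr => r _.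
by rewrite linearZ ffunE.
Qed.

Lemma linfunE_ker a b (K : gp a -> gp b -> F) (u : Vt a) :
  (linfun (fun v : Vt a => [ffun q => \sum_(r0 : gp a) v r0 * K r0 q] : Vt b)) u
  = [ffun q => \sum_(r0 : gp a) u r0 * K r0 q].
Proof.
pose f := fun v : Vt a => [ffun q => \sum_(r0 : gp a) v r0 * K r0 q] : Vt b.
have lin : linear f.
  move=> k x y; apply/ffunP => q; rewrite !ffunE.
  rewrite -[k *: \sum_r0 _]/(k * \sum_r0 x r0 * K r0 q) mulr_sumr -big_split.
  apply: eq_bigr => r0 _.
  by rewrite !ffunE -[k *: x r0]/(k * x r0) mulrDl mulrA.
pose fL : {linear _ -> _} := HB.pack f (GRing.isLinear.Build _ _ _ _ f lin).
exact: (lfunE fL u).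
Qed.

Lemma htensorE a b c d (f : 'Hom(Vt a, Vt b)) (g : 'Hom(Vt c, Vt d)) r0 q :
  htensor f g (pdelta F r0) q =
  \sum_(a1 : gp a) \sum_(c1 : gp c) \sum_(b1 : gp b) \sum_(d1 : gp d)
     (splits r0 a1 c1 && splits q b1 d1)%:R * (f (pdelta F a1) b1 * g (pdelta F c1) d1).
Proof.
rewrite /htensor linfunE_ker ffunE (bigD1 r0) //= pdeltaE eqxx mul1r.
rewrite [X in _ + X]big1 ?addr0 // => r hr.
by rewrite pdeltaE (negbTE hr) mul0r.
Qed.


Lemma split_cat a c (r : gp (a + c)) : pedges (lsplit r) ++ pedges (rsplit r) = pedges r.
Proof. by rewrite lsplit_edges rsplit_edges cat_take_drop. Qed.

Lemma concat_ex a c (L : gp a) (A : gp c) : ptarget L = pstart A ->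
  exists a1 : gp (a + c), [/\ pstart a1 = pstart L, pedges a1 = pedges L ++ pedges A,
                             ptarget a1 = ptarget A & splits a1 L A].
Proof.
move=> h.
have [a1 ha1] : exists a1 : gp (a + c), pdata a1 = (pstart L, pedges L ++ pedges A).
  apply: gpath_ex; last by rewrite size_cat !psize.
  by rewrite walk_cat pwalk -ptargetE h pwalk.
case: ha1 => h1 h2.
have h3 : ptarget a1 = ptarget A by rewrite ptargetE h1 h2 ptarget_cat -ptargetE h.
exists a1; split => //; apply/and3P; split; apply/eqP => //.
Qed.

Lemma sum1_unique (T : finType) (H : T -> F) y :
  (forall x, x != y -> H x = 0) -> \sum_x H x = H y.
Proof. by move=> h; rewrite (bigD1 y) //= big1 ?addr0 // => x; exact: h. Qed.

Lemma sum4_unique (T1 T2 T3 T4 : finType) (P : T1 -> T2 -> T3 -> T4 -> bool)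
  (G : T1 -> T2 -> T3 -> T4 -> F) y1 y2 y3 y4 :
  (forall x1 x2 x3 x4, P x1 x2 x3 x4 -> [/\ x1 = y1, x2 = y2, x3 = y3 & x4 = y4]) ->
  \sum_x1 \sum_x2 \sum_x3 \sum_x4 (P x1 x2 x3 x4)%:R * G x1 x2 x3 x4
    = (P y1 y2 y3 y4)%:R * G y1 y2 y3 y4.
Proof.
move=> hP.
have z x1 x2 x3 x4 : ~~ P x1 x2 x3 x4 -> (P x1 x2 x3 x4)%:R * G x1 x2 x3 x4 = 0.
  by move/negbTE->; rewrite mul0r.
rewrite (@sum1_unique _ _ y1) => [|x1 h1]; last first.
  apply: big1 => x2 _; apply: big1 => x3 _; apply: big1 => x4 _; apply: z.
  by apply/negP => /hP [e _ _ _]; rewrite e eqxx in h1.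
rewrite (@sum1_unique _ _ y2) => [|x2 h2]; last first.
  apply: big1 => x3 _; apply: big1 => x4 _; apply: z.
  by apply/negP => /hP [_ e _ _]; rewrite e eqxx in h2.
rewrite (@sum1_unique _ _ y3) => [|x3 h3]; last first.
  apply: big1 => x4 _; apply: z.
  by apply/negP => /hP [_ _ e _]; rewrite e eqxx in h3.
rewrite (@sum1_unique _ _ y4) => [//|x4 h4]; apply: z.
by apply/negP => /hP [_ _ _ e]; rewrite e eqxx in h4.
Qed.

Section Core.
Variables (p m n r : nat).

Definition cond' (P : gp (p + m + r)) (L : gp p) (A : gp m) (B : gp n) (R : gp r) :=
  [&& ptarget L == pstart A, pstart A == pstart B, ptarget A == ptarget B,
      pstart R == ptarget A & (pstart L, pedges L ++ pedges A ++ pedges R) == pdata P].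

Definition Xd (L : gp p) (B : gp n) (R : gp r) := (pstart L, pedges L ++ pedges B ++ pedges R).

Lemma decomp P (P' : gp (p + n + r)) L A B R :
  cond' P L A B R && (pdata P' == Xd L B R) ->
  [/\ L = lsplit (lsplit P), A = rsplit (lsplit P) & R = rsplit P] /\
  [/\ L = lsplit (lsplit P'), B = rsplit (lsplit P') & R = rsplit P'].
Proof.
case/andP => /and5P[/eqP h1 /eqP h2 /eqP h3 /eqP h4 /eqP [h5 h6]] /eqP [h7 h8].
have [a1 [e1 e2 e3 s1]] := concat_ex h1.
have [b1 [f1 f2 f3 s2]] := concat_ex (etrans h1 h2).
have sP : splits P a1 R.
  by apply/and3P; split; apply/eqP; rewrite ?e2 ?e1 -?h6 ?catA // e3.
have sP' : splits P' b1 R.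
  by apply/and3P; split; apply/eqP; rewrite ?f2 ?f1 ?h8 ?catA // f3 -h3.
move: sP sP'; rewrite !splits_eq => /andP[/eqP ea /eqP eR] /andP[/eqP eb /eqP eR'].
move: s1 s2; rewrite !splits_eq -ea -eb => /andP[/eqP -> /eqP ->] /andP[/eqP -> /eqP ->].
by [].
Qed.

Lemma cond_self (P : gp (p + m + r)) (P' : gp (p + n + r)) :
  (cond' P (lsplit (lsplit P)) (rsplit (lsplit P)) (rsplit (lsplit P')) (rsplit P)
    && (pdata P' == Xd (lsplit (lsplit P)) (rsplit (lsplit P')) (rsplit P)))
  = (lsplit (lsplit P') == lsplit (lsplit P)) && (rsplit P' == rsplit P).
Proof.
apply/idP/idP.
  move=> h; have := decomp h; case=> _ [e1 _ e2].
  by rewrite -e1 -e2 !eqxx.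
case/andP => /eqP e1 /eqP e2.
have tP : ptarget (lsplit P) = ptarget (lsplit P').
  by rewrite -!rsplit_start e2.
apply/andP; split; first (apply/and5P; split; apply/eqP).
- by rewrite rsplit_start.
- by rewrite !rsplit_start e1.
- by rewrite !rsplit_target.
- by rewrite rsplit_start rsplit_target.
- by rewrite /pdata !lsplit_start catA !split_cat.
apply/eqP; rewrite /pdata /Xd -e1 -e2 !lsplit_start catA !split_cat //.
Qed.

Lemma coreH (x : 'Hom(Vt m, Vt n)) (P : gp (p + m + r)) (P' : gp (p + n + r)) :
  htensor (htensor (hid src tgt F p) x) (hid src tgt F r) (pdelta F P) P' =
  \sum_(L : gp p) \sum_(A : gp m) \sum_(B : gp n) \sum_(R : gp r)
     (cond' P L A B R && (pdata P' == Xd L B R))%:R * x (pdelta F A) B.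
Proof.
rewrite htensorE (@sum4_unique _ _ _ _ _ _ (lsplit P) (rsplit P) (lsplit P') (rsplit P')); last first.
  by move=> a1 c1 b1 d1 /andP[]; rewrite !splits_eq => /andP[/eqP-> /eqP->] /andP[/eqP-> /eqP->].
rewrite !splits_self /= mul1r htensorE.
rewrite (@sum4_unique _ _ _ _ _ _ (lsplit (lsplit P)) (rsplit (lsplit P)) (lsplit (lsplit P')) (rsplit (lsplit P'))); last first.
  by move=> a1 c1 b1 d1 /andP[]; rewrite !splits_eq => /andP[/eqP-> /eqP->] /andP[/eqP-> /eqP->].
rewrite !splits_self /= mul1r !hidE !pdeltaE.
rewrite (@sum4_unique _ _ _ _ _ _ (lsplit (lsplit P)) (rsplit (lsplit P)) (rsplit (lsplit P')) (rsplit P)); last first.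
  by move=> L A B R /decomp [[-> -> ->] [_ -> _]].
rewrite cond_self.
case: (lsplit (lsplit P') == lsplit (lsplit P)); case: (rsplit P' == rsplit P);
  by rewrite /= ?mul0r ?mulr0 ?mul1r ?mulr1.
Qed.
End Core.


Lemma reorg (T0 T1 T2 T3 T4 : finType) (C : T1 -> T2 -> T3 -> T4 -> bool)
  (D : T0 -> T1 -> T2 -> T3 -> T4 -> bool) (c : T1 -> T2 -> T3 -> T4 -> F) (Phi : T0 -> F) :
  \sum_x0 (\sum_x1 \sum_x2 \sum_x3 \sum_x4
       (C x1 x2 x3 x4 && D x0 x1 x2 x3 x4)%:R * c x1 x2 x3 x4) * Phi x0
  = \sum_x1 \sum_x2 \sum_x3 \sum_x4 (C x1 x2 x3 x4)%:R * c x1 x2 x3 x4 *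
       \sum_x0 (D x0 x1 x2 x3 x4)%:R * Phi x0.
Proof.
transitivity (\sum_x0 \sum_x1 \sum_x2 \sum_x3 \sum_x4
   (C x1 x2 x3 x4 && D x0 x1 x2 x3 x4)%:R * c x1 x2 x3 x4 * Phi x0).
  apply: eq_bigr => x0 _; rewrite mulr_suml; apply: eq_bigr => x1 _.
  rewrite mulr_suml; apply: eq_bigr => x2 _; rewrite mulr_suml; apply: eq_bigr => x3 _.
  by rewrite mulr_suml.
rewrite exchange_big; apply: eq_bigr => x1 _; rewrite exchange_big; apply: eq_bigr => x2 _.
rewrite exchange_big; apply: eq_bigr => x3 _; rewrite exchange_big; apply: eq_bigr => x4 _.
rewrite mulr_sumr; apply: eq_bigr => x0 _.
by case: (C _ _ _ _); case: (D _ _ _ _ _); rewrite /= ?mul0r ?mul1r ?mulr0.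
Qed.

Lemma sum_pair (T1 T2 : finType) (G : T1 * T2 -> F) :
  \sum_(sg : T1 * T2) G sg = \sum_x1 \sum_x2 G (x1, x2).
Proof. by rewrite pair_big; apply: eq_bigr => -[]. Qed.

Definition phi m n (f : 'Hom(Vt m, Vt n)) : GMA src tgt F m n :=
  [ffun b => f (pdelta F (val b).1) (val b).2].

Lemma mainL s k (t : mtangle s k) (xs : tinputs (fun m n => 'Hom(Vt m, Vt n)) t)
  (P : gp s) (Q : gp k) :
  vec_act xs (pdelta F P) Q = \sum_(sg : tstate src tgt t)
    ([&& st_valid sg, st_bot sg == pdata P & st_top sg == pdata Q])%:R
      * st_weight sg (tmap phi xs).
Proof.
elim: t xs P Q => [s0|p m n r k0 t' IH] xs P Q.
  rewrite /= hidE pdeltaE (@sum1_unique _ _ Q) => [|x hx]; last first.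
    by rewrite !(inj_eq (@pdata_inj _)) (negbTE hx) andbF mul0r.
  by rewrite eqxx andbT mulr1 (inj_eq (@pdata_inj _)).
rewrite comp_lfunE lin_expand.
rewrite (eq_bigr (fun P' => (\sum_(L : gp p) \sum_(A : gp m) \sum_(B : gp n) \sum_(R : gp r)
     (cond' P L A B R && (pdata P' == Xd L B R))%:R * xs.1 (pdelta F A) B) * vec_act xs.2 (pdelta F P') Q)); last first.
  move=> P' _; congr (_ * _).
  exact: coreH.
rewrite reorg !sum_pair.
apply: eq_bigr => L _; apply: eq_bigr => A _; apply: eq_bigr => B _.
apply: eq_bigr => R _ /=.
case hc: (cond' P L A B R); last first.
  rewrite !mul0r; symmetry; apply: big1 => sg' _.
  suff -> : [&& [&& ptarget L == pstart A, pstart A == pstart B, ptarget A == ptarget B,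
        pstart R == ptarget A, st_bot sg' == Xd L B R & st_valid sg'],
        (pstart L, pedges L ++ pedges A ++ pedges R) == pdata P
        & st_top sg' == pdata Q] = false by rewrite mul0r.
  apply/negbTE/negP => /and3P [/and5P[h1 h2 h3 h4 _] h5 _]; move: hc.
  by rewrite /cond' h1 h2 h3 h4 h5.
have [P0 hP0] : exists P0 : gp (p + n + r), pdata P0 = Xd L B R.
  move: (hc) => /and5P[/eqP h1 /eqP h2 /eqP h3 /eqP h4 _].
  apply: gpath_ex; last by rewrite !size_cat !psize addnA.
  by rewrite /= !walk_cat !pwalk -!ptargetE h1 h2 pwalk -ptargetE -h3 -h4 pwalk.
rewrite -hP0 sum_pdata IH mul1r mulr_sumr; apply: eq_bigr => sg' _.
move: (hc) => /and5P[/eqP h1 /eqP h2 /eqP h3 /eqP h4 h5].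
rewrite /gcoef; case: insubP => [b hb eb | hn]; last by rewrite /= h2 h3 !eqxx in hn.
rewrite ffunE eb /= h5 h1 h2 h3 h4 !eqxx hP0 /= mulrCA; congr (_ * _).
rewrite h3 eqxx /Xd /=.
by case: (st_valid _); case: (_ == _); case: (_ == _).
Qed.

Lemma big_mkcondR (T : finType) (Pr : pred T) (G : T -> F) :
  \sum_(i | Pr i) G i = \sum_i (Pr i)%:R * G i.
Proof. by rewrite big_mkcond; apply: eq_bigr => i _; case: (Pr i); rewrite ?mul1r ?mul0r. Qed.

Lemma graded_delta m n (f : 'Hom(Vt m, Vt n)) (r : gp m) (q : gp n) :
  graded f -> f (pdelta F r) q != 0 -> pstart q = pstart r /\ ptarget q = ptarget r.
Proof.
move=> gf; apply: (gf (pstart r) (ptarget r) (pdelta F r)) => r'.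
rewrite pdeltaE; have [-> //|ne] := eqVneq r' r.
by rewrite /= eqxx.
Qed.

End Aux.

Unset Implicit Arguments.
Set Strict Implicit.

Theorem theorem3p35 (F : fieldType) (J E : finType) (src tgt : E -> J)
    (conn : gconnected src tgt) :
  exists phi : forall m n, 'Hom(Vt src tgt F m, Vt src tgt F n) -> GMA src tgt F m n,
    (* each phi m n is linear ... *)
    (forall m n (a : F) (f g : 'Hom(Vt src tgt F m, Vt src tgt F n)),
        phi m n (a *: f + g) = a *: phi m n f + phi m n g) /\
    (* ... and restricts to a bijection from the Hom-space of Vec(J x J) *)
    (forall m n (f g : 'Hom(Vt src tgt F m, Vt src tgt F n)),
        graded f -> graded g -> phi m n f = phi m n g -> f = g) /\
    (forall m n (y : GMA src tgt F m n),
        exists2 f, graded f & phi m n f = y) /\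
    (* ... intertwining the actions of all monoidal tangles *)
    (forall s k (t : mtangle s k)
            (xs : tinputs (fun m n => 'Hom(Vt src tgt F m, Vt src tgt F n)) t),
        tall (fun m n (f : 'Hom(Vt src tgt F m, Vt src tgt F n)) => graded f) xs ->
        phi s k (vec_act xs) = gma_act (tmap phi xs)).
Proof.
exists (@phi F J E src tgt); split; [|split; [|split]].
- move=> m n a f g; apply/ffunP => b.
  by rewrite !ffunE add_lfunE scale_lfunE !ffunE.
- move=> m n f g gf gg e; apply/lfunP => v; apply/ffunP => q.
  rewrite (lin_expand f) (lin_expand g); apply: eq_bigr => r _; congr (_ * _).
  case: (boolP ((pstart r == pstart q) && (ptarget r == ptarget q))) => hb.
    have := congr1 (fun h : GMA src tgt F m n => h (exist _ (r, q) hb : gbasis src tgt m n)) e.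
    by rewrite !ffunE.
  have z : forall h : 'Hom(Vt src tgt F m, Vt src tgt F n), graded h ->
      h (pdelta F r) q = 0.
    move=> h gh; apply/eqP; apply/negP => /negP /(graded_delta gh) [h1 h2].
    by rewrite h1 h2 !eqxx in hb.
  by rewrite !z.
- move=> m n y.
  pose K := fun (r : gpath src tgt m) (q : gpath src tgt n) => gcoef y r q.
  exists (linfun (fun v : Vt src tgt F m =>
     [ffun q => \sum_(r0 : gpath src tgt m) v r0 * K r0 q] : Vt src tgt F n)).
    move=> i k v sv q; rewrite linfunE_ker ffunE => hq.
    have [r _ hr] : exists2 r, true & v r * K r q != 0.
      apply/exists_inP; apply: contraR hq => /exists_inPn h.
      by apply/eqP; apply: big1 => r _; move: (h r isT); rewrite negbK => /eqP.
    move: hr; rewrite mulf_eq0 negb_or => /andP[/sv [<- <-]].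
    rewrite /K /gcoef; case: insubP => [b /andP[/eqP -> /eqP ->] _ _ | _]; last by rewrite eqxx.
    by [].
  apply/ffunP => b; rewrite !ffunE linfunE_ker ffunE.
  rewrite (@sum1_unique _ _ _ (val b).1) => [|r hr]; last by rewrite pdeltaE (negbTE hr) mul0r.
  rewrite pdeltaE eqxx mul1r /K /gcoef -surjective_pairing.
  case: insubP => [b' _ e|]; first by congr (y _); apply: val_inj.
  by rewrite (valP b).
- move=> s k t xs _; apply/ffunP => b.
  by rewrite !ffunE mainL big_mkcondR.
Qed.
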